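(* Let $G=(U,V,E)$ be a path restricted ordered bipartite graph and let $v$ be any vertex of $G$. Let $T_r(v)$ be the subgraph formed by the union of all forward paths starting at $v$ whose vertices decrease in order (i.e., read from $v$, the $U$-vertices strictly decrease and the $V$-vertices strictly decrease). Then the subgraph of $G$ induced by the vertex set of $T_r(v)$ has exactly $N-1$ edges, where $N$ is the number of vertices of $T_r(v)$; i.e., this induced subgraph coincides with $T_r(v)$ and is a tree.
   Context: An ordered bipartite graph $G=(U,V,E)$ consists of disjoint finite sets $U,V$, each totally ordered, and $E\subseteq U\times V$. A forward path is a sequence $w_0,\dots,w_m$ of distinct vertices alternating between $U$ and $V$, consecutive ones adjacent, such that the $U$-vertices appear in strictly increasing order and the $V$-vertices appear in strictly increasing order along the sequence (or, read in reverse, both strictly decreasing). A back edge to a forward path $w_0,\dots,w_m$ (written in increasing direction) is an edge $\{w_0,x\}\in E$ with $x$ in the part not containing $w_0$ and $w_1<x\le M$, where $M$ is the largest vertex of the path in that part. $G$ is a path restricted ordered bipartite graph if no forward path has a back edge. *)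

(* Defs.v *)
From mathcomp Require Import all_boot.
Set Implicit Arguments. Unset Strict Implicit. Unset Printing Implicit Defensive.

(* An ordered bipartite graph: U = 'I_m, V = 'I_n (with their natural orders,
   every finite totally ordered set being order-isomorphic to an ordinal),
   E : 'I_m -> 'I_n -> bool the edge relation E ⊆ U × V. *)
Section OBG.
Variables (m n : nat) (E : 'I_m -> 'I_n -> bool).

Definition vtx := ('I_m + 'I_n)%type.

Definition adj (x y : vtx) : bool :=
  match x, y with
  | inl u, inr w => E u w
  | inr w, inl u => E u w
  | _, _ => false
  end.

Definition getU (x : vtx) : option 'I_m := if x is inl u then Some u else None.
Definition getV (x : vtx) : option 'I_n := if x is inr w then Some w else None.

Definition incr_fpath (p : seq vtx) : bool :=
  match p with
  | [::] => false
  | w0 :: s =>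
    [&& path adj w0 s, uniq p,
        sorted ltn (map (@nat_of_ord m) (pmap getU p)) &
        sorted ltn (map (@nat_of_ord n) (pmap getV p))]
  end.

Definition fpath (p : seq vtx) : bool := incr_fpath p || incr_fpath (rev p).

Definition has_back_edge (p : seq vtx) : Prop :=
  match p with
  | inl u :: inr b :: _ =>
      exists c : 'I_n, [/\ E u c, b < c & c <= \max_(w <- pmap getV p) (w : nat)]
  | inr b :: inl a :: _ =>
      exists c : 'I_m, [/\ E c b, a < c & c <= \max_(u <- pmap getU p) (u : nat)]
  | _ => False
  end.

Definition path_restricted : Prop :=
  forall p : seq vtx, incr_fpath p -> ~ has_back_edge p.

Definition dec_fpath (v : vtx) (s : seq vtx) : bool := incr_fpath (rev (v :: s)).

Definition in_Tr (v x : vtx) : Prop :=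
  exists s : seq vtx, dec_fpath v s /\ x \in v :: s.

Definition induced_edges (S : {set vtx}) : nat :=
  #|[set e : 'I_m * 'I_n | [&& E e.1 e.2, inl e.1 \in S & inr e.2 \in S]]|.

End OBG.

(* Main.v *)
Require Import Defs.
From mathcomp Require Import all_boot.
Set Implicit Arguments. Unset Strict Implicit. Unset Printing Implicit Defensive.

Definition part {m n} (x : vtx m n) : bool := if x is inl _ then true else false.
Definition idx {m n} (x : vtx m n) : nat :=
  match x with inl u => nat_of_ord u | inr w => nat_of_ord w end.
Definition rmono {m n} (x y : vtx m n) : bool := (part x == part y) ==> (idx x < idx y).
Definition incr {m n} (E : 'I_m -> 'I_n -> bool) (x : vtx m n) s :=
  path (adj E) x s && pairwise rmono (x :: s).

Lemma sortU m n (p : seq (vtx m n)) : sorted ltn (map val (pmap (@getU m n) p))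
  = pairwise (fun x y => (part x && part y) ==> (idx x < idx y)) p.
Proof.
rewrite sorted_pairwise; last exact: ltn_trans.
elim: p => //= x p IH.
have Hall : forall (u : 'I_m), all (ltn u) (map val (pmap (@getU m n) p)) =
   all (fun y => (part (inl u : vtx m n) && part y) ==> (idx (inl u : vtx m n) < idx y)) p.
  move=> u; elim: p {IH} => //= [[u'|w'] p' IHp] /=; by rewrite IHp.
case: x => [u|w] /=; rewrite -IH.
  by rewrite -Hall.
by rewrite all_predT.
Qed.

Lemma sortV m n (p : seq (vtx m n)) : sorted ltn (map val (pmap (@getV m n) p))
  = pairwise (fun x y => (~~ part x && ~~ part y) ==> (idx x < idx y)) p.
Proof.
rewrite sorted_pairwise; last exact: ltn_trans.
elim: p => //= x p IH.
have Hall : forall (u : 'I_n), all (ltn u) (map val (pmap (@getV m n) p)) =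
   all (fun y => (~~ part (inr u : vtx m n) && ~~ part y) ==> (idx (inr u : vtx m n) < idx y)) p.
  move=> u; elim: p {IH} => //= [[u'|w'] p' IHp] /=; by rewrite IHp.
case: x => [u|w] /=; rewrite -IH.
  by rewrite all_predT.
by rewrite -Hall.
Qed.

Lemma incr_fpathE m n (E : 'I_m -> 'I_n -> bool) x s :
  incr_fpath E (x :: s) = incr E x s.
Proof.
rewrite /incr_fpath /incr sortU sortV uniq_pairwise.
rewrite -!pairwise_relI; congr (_ && _); apply: (eq_pairwise _ (x :: s)) => y z /=.
case: y z => [y|y] [z|z] /=; rewrite /rmono /=; try by [].
- rewrite andbT; apply/andP/idP => [[]//|H]; split=>//.
  by apply/negP => /eqP [] Hz; rewrite Hz ltnn in H.
- apply/andP/idP => [[]//|H]; split=>//.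
  by apply/negP => /eqP [] Hz; rewrite Hz ltnn in H.
Qed.

Lemma adj_sym m n (E : 'I_m -> 'I_n -> bool) x y : adj E x y = adj E y x.
Proof. by case: x y => [?|?] [?|?]. Qed.

Lemma adj_part m n (E : 'I_m -> 'I_n -> bool) x y : adj E x y -> part x != part y.
Proof. by case: x y => [?|?] [?|?]. Qed.

Lemma vtx_eq m n (x y : vtx m n) : part x = part y -> idx x = idx y -> x = y.
Proof. by case: x y => [?|?] [?|?] //= _ H; congr (_ _); apply: val_inj. Qed.

Lemma incr_cons m n (E : 'I_m -> 'I_n -> bool) y x s :
  incr E y (x :: s) = [&& adj E y x, all (rmono y) (x :: s) & incr E x s].
Proof.
rewrite /incr /=.
case: (adj E y x) => //=; case: (path (adj E) x s) => //=; by rewrite !andbF.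
Qed.

Lemma incr_suffix m n (E : 'I_m -> 'I_n -> bool) s1 x y s2 :
  incr E x (s1 ++ y :: s2) -> incr E y s2.
Proof.
elim: s1 x => [|z s1 IH] x /=; rewrite incr_cons => /and3P [_ _ H] //.
exact: IH H.
Qed.

Lemma incr_rmono m n (E : 'I_m -> 'I_n -> bool) x s y :
  incr E x s -> y \in s -> rmono x y.
Proof. by move=> /andP [_]; rewrite pairwise_cons => /andP [/allP H _] /H. Qed.

Lemma incr_noret m n (E : 'I_m -> 'I_n -> bool) x s :
  incr E x s -> last x s = x -> s = [::].
Proof.
case: s => // z s H Hl.
have := incr_rmono H (mem_last z s); rewrite /= in Hl; rewrite Hl /rmono eqxx ltnn //.
Qed.

Lemma lastmax m n (E : 'I_m -> 'I_n -> bool) x s y :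
  incr E x s -> y \in x :: s -> part y = part (last x s) -> idx y <= idx (last x s).
Proof.
move=> /andP [_]; rewrite lastI pairwise_rcons mem_rcons inE => /andP [/allP H _].
case/orP => [/eqP -> //| /H]; rewrite /rmono => /implyP Hi Hp.
by apply: ltnW; apply: Hi; rewrite Hp.
Qed.

Definition reach m n (E : 'I_m -> 'I_n -> bool) v x := exists t, incr E x t /\ last x t = v.

Lemma inTr_reach m n (E : 'I_m -> 'I_n -> bool) v x : in_Tr E v x <-> reach E v x.
Proof.
split.
  move=> [s [Hd Hx]]; move: Hd; rewrite /dec_fpath rev_cons.
  have Hx' : x \in rcons (rev s) v by rewrite mem_rcons inE mem_rev -in_cons.
  have [p1 [p2 Hp]] : exists p1 p2, rcons (rev s) v = p1 ++ x :: p2.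
    by case/splitPr: Hx' => p1 p2; exists p1, p2.
  rewrite Hp => Hi.
  exists p2; split.
    case: p1 Hp Hi => [|z p1] _; rewrite incr_fpathE //.
    exact: incr_suffix.
  by move: (congr1 (last x) Hp); rewrite last_rcons last_cat /= => ->.
move=> [t [Hi Hl]]; exists (rev (belast x t)); split.
  by rewrite /dec_fpath rev_cons revK -Hl -lastI incr_fpathE.
case: t Hi Hl => [|z t] /= _ Hl; first by rewrite Hl inE eqxx.
by rewrite inE mem_rev /= inE eqxx orbT.
Qed.

Lemma BE m n (E : 'I_m -> 'I_n -> bool) z w t q y :
  adj E z w -> adj E z q -> part q = part w -> idx w < idx q ->
  y \in z :: w :: t -> part y = part w -> idx q <= idx y ->
  has_back_edge E (z :: w :: t).
Proof.
case: z w q y => [u|u] [b|b] [c|c] [d|d] //= Hzw Hzq Hpq Hwq Hy Hpy Hqy //.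
  exists c; split => //; apply: leq_trans Hqy _.
  apply: (leq_bigmax_seq (F := fun w : 'I_n => nat_of_ord w)) => //.
  by have := map_f (@getV m n) Hy; rewrite -mem_pmap.
exists c; split => //; apply: leq_trans Hqy _.
apply: (leq_bigmax_seq (F := fun w : 'I_m => nat_of_ord w)) => //.
by have := map_f (@getU m n) Hy; rewrite -mem_pmap.
Qed.

Lemma LB m n (E : 'I_m -> 'I_n -> bool) v (hPR : path_restricted E) z w t q :
  incr E z (w :: t) -> last w t = v -> reach E v q -> adj E z q ->
  part q = part w -> idx q <= idx w.
Proof.
move=> HP Hl [tq [HQ HlQ]] Hzq Hpq.
rewrite leqNgt; apply/negP => Hwq.
have Hzw : adj E z w by move: HP; rewrite incr_cons => /and3P [].
have HPf : incr_fpath E (z :: w :: t) by rewrite incr_fpathE.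
case Hhas: (has (fun y => (part y == part w) && (idx q <= idx y)) (z :: w :: t)).
  case/hasP: Hhas => y Hy /andP [/eqP Hpy Hqy].
  exact: (hPR _ HPf (BE Hzw Hzq Hpq Hwq Hy Hpy Hqy)).
have Hnot : forall y, y \in z :: w :: t -> part y = part w -> idx y < idx q.
  move=> y Hy Hpy; move/hasPn: Hhas => /(_ y Hy); by rewrite Hpy eqxx /= -ltnNge.
have HvP : v \in z :: w :: t by rewrite -Hl inE mem_last orbT.
case: (boolP (part q == part v)) => [/eqP Hqv | Hqv].
  have H1 := Hnot v HvP (etrans (esym Hqv) Hpq).
  have H2 := lastmax HQ (mem_head q tq) (etrans Hqv (congr1 part (esym HlQ))).
  by rewrite HlQ in H2; move: (leq_ltn_trans H2 H1); rewrite ltnn.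
case/lastP: tq HQ HlQ => [|r v'] HQ HlQ.
  by rewrite /= in HlQ; rewrite HlQ eqxx in Hqv.
rewrite last_rcons in HlQ; subst v'.
set d := last q r.
have Hdv : adj E d v by move: HQ => /andP [+ _]; rewrite rcons_path => /andP [].
have Hdin : d \in q :: r by exact: mem_last.
have Hpd : part d = part q.
  have := adj_part Hdv; move: Hqv; case: (part d); case: (part q); case: (part v) => //.
have Hqd : idx q <= idx d.
  move: Hdin; rewrite inE => /orP [/eqP -> //| Hdr].
  have := incr_rmono HQ (_ : d \in rcons r v); rewrite mem_rcons inE Hdr orbT => /(_ isT).
  by rewrite /rmono Hpd eqxx /= => /ltnW.
have HP' : incr E z (w :: rcons t d).
  rewrite -[w :: rcons t d]/(rcons (w :: t) d) /incr rcons_path -rcons_cons pairwise_rcons.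
  move: HP => /andP [HP1 HP2]; rewrite HP1 HP2 andbT.
  have -> : last z (w :: t) = v by [].
  rewrite adj_sym Hdv.
  apply/allP => y Hy; rewrite /rmono; apply/implyP => /eqP Hpy.
  apply: leq_trans (Hnot y Hy _) Hqd; by rewrite Hpy Hpd.
have HPf' : incr_fpath E (z :: w :: rcons t d) by rewrite incr_fpathE.
apply: (hPR _ HPf' (BE (y := d) Hzw Hzq Hpq Hwq _ _ Hqd)).
  by rewrite !inE mem_rcons inE eqxx !orbT.
by rewrite Hpd.
Qed.

Definition child m n (E : 'I_m -> 'I_n -> bool) v x y :=
  exists t, incr E x (y :: t) /\ last y t = v.

Lemma part3 (a b c : bool) : a != c -> b != c -> a = b.
Proof. by case: a; case: b; case: c. Qed.

Lemma headmin m n (E : 'I_m -> 'I_n -> bool) x s z :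
  incr E x s -> z \in x :: s -> part z = part x -> idx x <= idx z.
Proof.
move=> H; rewrite inE => /orP [/eqP -> //| Hz] Hp.
by have := incr_rmono H Hz; rewrite /rmono Hp eqxx /= => /ltnW.
Qed.

Lemma incr_nil m n (E : 'I_m -> 'I_n -> bool) x : incr E x [::].
Proof. by []. Qed.

Lemma child_reach m n (E : 'I_m -> 'I_n -> bool) v x y :
  child E v x y -> reach E v x /\ reach E v y.
Proof.
move=> [t [Ht Hl]]; split; first by exists (y :: t).
by exists t; split => //; move: Ht; rewrite incr_cons => /and3P [].
Qed.

Lemma child_adj m n (E : 'I_m -> 'I_n -> bool) v x y : child E v x y -> adj E x y.
Proof. by move=> [t [Ht _]]; move: Ht; rewrite incr_cons => /and3P []. Qed.

Lemma child_neq m n (E : 'I_m -> 'I_n -> bool) v x y : child E v x y -> x != v.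
Proof.
move=> [t [Ht Hl]]; apply/eqP => Hx.
by have := incr_noret Ht; rewrite /= Hl Hx => /(_ erefl).
Qed.

Lemma child_uniq m n (E : 'I_m -> 'I_n -> bool) v (hPR : path_restricted E) x w1 w2 :
  child E v x w1 -> child E v x w2 -> w1 = w2.
Proof.
move=> H1 H2.
have [_ R1] := child_reach H1; have [_ R2] := child_reach H2.
have A1 := child_adj H1; have A2 := child_adj H2.
have Hp : part w2 = part w1.
  apply: (@part3 _ _ (part x)); apply: (adj_part (E := E)); by rewrite adj_sym.
move: H1 H2 => [t1 [T1 L1]] [t2 [T2 L2]].
apply: vtx_eq; first by [].
apply/eqP; rewrite eqn_leq; apply/andP; split.
  exact: (LB hPR T2 L2 R1 A1).
exact: (LB hPR T1 L1 R2 A2).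
Qed.

Lemma child_NB m n (E : 'I_m -> 'I_n -> bool) v (hPR : path_restricted E) a b :
  child E v a b -> child E v b a -> False.
Proof.
move=> H1 H2; have Hn := child_neq H1.
move: H2 => [[|c t2] [T2 L2]].
  by rewrite /= in L2; rewrite L2 eqxx in Hn.
have Hac : incr E a (c :: t2) by move: T2; rewrite incr_cons => /and3P [].
have Rc : reach E v c by exists t2; split => //; move: Hac; rewrite incr_cons => /and3P [].
have Aac : adj E a c by move: Hac; rewrite incr_cons => /and3P [].
have Aab := child_adj H1.
have Hp : part c = part b.
  apply: (@part3 _ _ (part a)); apply: (adj_part (E := E)); by rewrite adj_sym.
move: H1 => [t1 [T1 L1]].
have H := LB hPR T1 L1 Rc Aac Hp.
have := incr_rmono T2 (_ : c \in a :: c :: t2); rewrite !inE eqxx orbT => /(_ isT).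
by rewrite /rmono Hp eqxx /= ltnNge H.
Qed.

Lemma child_either m n (E : 'I_m -> 'I_n -> bool) v (hPR : path_restricted E) x y :
  reach E v x -> reach E v y -> adj E x y -> child E v x y \/ child E v y x.
Proof.
move=> [t [Tx Lx]] Ry Axy.
case: (eqVneq x v) => [Hxv | Hxv].
  subst x; right; move: (Ry) => [[|w t'] [Ty Ly]].
    by rewrite /= in Ly; move: (adj_part Axy); rewrite Ly eqxx.
  have Ayw : adj E y w by move: Ty; rewrite incr_cons => /and3P [].
  have Hp : part v = part w.
    apply: (@part3 _ _ (part y)); apply: (adj_part (E := E)); by rewrite // adj_sym.
  have H1 := LB hPR Ty Ly (ex_intro _ [::] (conj (incr_nil E v) erefl)) (etrans (adj_sym _ _ _) Axy) Hp.
  have H3 : idx w <= idx v.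
    rewrite -Ly; apply: (lastmax Ty); first by rewrite !inE eqxx orbT.
    by rewrite Ly Hp.
  have Hw : w = v by apply: vtx_eq; [rewrite Hp | apply/eqP; rewrite eqn_leq H1 H3].
  by subst w; exists t'.
move: Tx Lx; case: t => [|p t'] Tx Lx.
  by rewrite /= in Lx; rewrite Lx eqxx in Hxv.
have Axp : adj E x p by move: Tx; rewrite incr_cons => /and3P [].
have Tp : incr E p t' by move: Tx; rewrite incr_cons => /and3P [].
have Hpy : part y = part p.
  apply: (@part3 _ _ (part x)); apply: (adj_part (E := E)); by rewrite // adj_sym.
have Hle := LB hPR Tx Lx Ry Axy Hpy.
case: (eqVneq y p) => [-> | Hyp]; first by left; exists t'.
have Hlt : idx y < idx p.
  rewrite ltn_neqAle Hle andbT; apply/eqP => Hi; by rewrite (vtx_eq Hpy Hi) eqxx in Hyp.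
right; exists (p :: t'); split => //.
rewrite incr_cons; apply/and3P; split => //; first by rewrite adj_sym.
apply/allP => z Hz; rewrite /rmono; apply/implyP => /eqP Hpz.
move: Hz; rewrite inE => /orP [/eqP Hzx | Hz].
  by subst z; move: (adj_part Axy); rewrite Hpz eqxx.
apply: leq_trans Hlt (headmin Tp Hz _); by rewrite -Hpz.
Qed.

Definition chb m n (E : 'I_m -> 'I_n -> bool) v (S : {set vtx m n}) (x y : vtx m n) : bool :=
  (x != v) && [forall z : vtx m n, (adj E x z && (z \in S)) ==> (idx z <= idx y)].

Lemma CH m n (E : 'I_m -> 'I_n -> bool) v (hPR : path_restricted E) (S : {set vtx m n})
  (inS : forall x, x \in S <-> reach E v x) x y :
  x \in S -> y \in S -> adj E x y -> child E v x y <-> chb E v S x y.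
Proof.
move=> Hx Hy Axy; split.
  move=> Hc; rewrite /chb (child_neq Hc) /=; apply/forallP => z; apply/implyP => /andP [Axz Hz].
  have Hp : part z = part y.
    apply: (@part3 _ _ (part x)); apply: (adj_part (E := E)); by rewrite // adj_sym.
  move: Hc => [t [T L]]; exact: (LB hPR T L (proj1 (inS z) Hz) Axz Hp).
move=> /andP [Hxv /forallP Hall].
move: (proj1 (inS x) Hx) => [[|p t] [T L]].
  by rewrite /= in L; rewrite L eqxx in Hxv.
have Axp : adj E x p by move: T; rewrite incr_cons => /and3P [].
have Rp : reach E v p by exists t; split => //; move: T; rewrite incr_cons => /and3P [].
have Hp : part y = part p.
  apply: (@part3 _ _ (part x)); apply: (adj_part (E := E)); by rewrite // adj_sym.
have H1 := LB hPR T L (proj1 (inS y) Hy) Axy Hp.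
have H2 : idx p <= idx y by move/implyP: (Hall p); apply; rewrite Axp /=; apply/inS.
have -> : y = p by apply: vtx_eq; [ | apply/eqP; rewrite eqn_leq H1 H2].
by exists t.
Qed.

Theorem lemma3p3 (m n : nat) (E : 'I_m -> 'I_n -> bool)
  (hPR : path_restricted E) (v : vtx m n) (S : {set vtx m n})
  (hS : forall x, x \in S <-> in_Tr E v x) :
  induced_edges E S = #|S| - 1.
Proof.
have inS : forall x, x \in S <-> reach E v x.
  move=> x; split => [/hS /inTr_reach //| /inTr_reach /hS //].
have HvS : v \in S by apply/inS; exists [::].
set A := [set e : 'I_m * 'I_n | [&& E e.1 e.2, inl e.1 \in S & inr e.2 \in S]].
have -> : induced_edges E S = #|A| by [].
pose f (e : 'I_m * 'I_n) : vtx m n :=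
  if chb E v S (inl e.1) (inr e.2) then inl e.1 else inr e.2.
have CHe : forall e, e \in A -> child E v (inl e.1) (inr e.2) <-> chb E v S (inl e.1) (inr e.2).
  move=> e; rewrite inE => /and3P [He Ha Hb]; exact: CH.
have Eith : forall e, e \in A -> ~~ chb E v S (inl e.1) (inr e.2) -> child E v (inr e.2) (inl e.1).
  move=> e HeA Hn; have := HeA; rewrite inE => /and3P [He Ha Hb].
  case: (child_either hPR (proj1 (inS _) Ha) (proj1 (inS _) Hb) (He : adj E (inl e.1) (inr e.2))) => // Hc.
  by move/(CHe e HeA): Hc; rewrite (negbTE Hn).
have Hinj : {in A &, injective f}.
  move=> e1 e2 H1 H2; rewrite /f.
  case C1: (chb _ _ _ _ _); case C2: (chb _ _ _ _ _) => // Heq.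
  - case: Heq => Ha; have := proj2 (CHe e1 H1) C1; have := proj2 (CHe e2 H2) C2.
    rewrite -Ha => Hc2 Hc1; case: (child_uniq hPR Hc1 Hc2) => Hb.
    by case: e1 e2 Ha Hb {H1 H2 C1 C2 Hc1 Hc2} => ? ? [? ?] /= -> ->.
  - case: Heq => Hb; have := Eith e1 H1 (negbT C1); have := Eith e2 H2 (negbT C2).
    rewrite -Hb => Hc2 Hc1; case: (child_uniq hPR Hc1 Hc2) => Ha.
    by case: e1 e2 Ha Hb {H1 H2 C1 C2 Hc1 Hc2} => ? ? [? ?] /= -> ->.
have Himg : f @: A = S :\ v.
  apply/eqP; rewrite eqEsubset; apply/andP; split.
    apply/subsetP => x /imsetP [e He ->]; rewrite !inE /f.
    have := He; rewrite inE => /and3P [_ Ha Hb].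
    case C: (chb _ _ _ _ _).
      by move: C => /andP [-> _].
    by rewrite (child_neq (Eith e He (negbT C))).
  apply/subsetP => x; rewrite !inE => /andP [Hxv Hx].
  move: (proj1 (inS x) Hx) => [[|p t] [T L]].
    by rewrite /= in L; rewrite L eqxx in Hxv.
  have Axp : adj E x p by move: T; rewrite incr_cons => /and3P [].
  have Hp : p \in S by apply/inS; exists t; split => //; move: T; rewrite incr_cons => /and3P [].
  have Hc : child E v x p by exists t.
  case: x p Hxv Hx T L Axp Hp Hc => [a|b] [a'|b'] //= Hxv Hx T L Axp Hp Hc; apply/imsetP.
    have HeA : (a, b') \in A by rewrite inE /= Axp Hx Hp.
    by exists (a, b') => //; rewrite /f /= (proj1 (CHe _ HeA) Hc).
  have HeA : (a', b) \in A by rewrite inE /= Axp Hx Hp.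
  exists (a', b) => //; rewrite /f /=.
  case C: (chb _ _ _ _ _) => //.
  by case: (child_NB hPR (proj2 (CHe _ HeA) C) Hc).
rewrite -(card_in_imset Hinj) Himg (cardsD1 v S) HvS add1n subn1.
by [].
Qed.
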